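(* Let $(\mathfrak A,|\cdot|)$ and $(\mathfrak B,\|\cdot\|)$ be Banach algebras such that $\mathfrak B$ is an envelope of $\mathfrak A$ (see context), with inclusion $\iota\colon\mathfrak A\to\mathfrak B$, and let $X$ be a Banach $\mathfrak B$-bimodule. Then $X$ is a Banach $\mathfrak A$-bimodule by restriction of the actions, and $\Delta(X)$ (the module of double centralizers from $\mathfrak A$ into $X$) is a Banach $\mathfrak B$-bimodule under the actions $$b.(L,R)=(L',R'),\ L'(a)=b.L(a),\ R'(a)=R(ab);\qquad (L,R).b=(L'',R''),\ L''(a)=L(ba),\ R''(a)=R(a).b,$$ for $b\in\mathfrak B$, $(L,R)\in\Delta(X)$, $a\in\mathfrak A$. For each bounded derivation $D\colon\mathfrak A\to X$ there is a bounded derivation $\widetilde D\colon\mathfrak B\to\Delta(X)$ with $\widetilde D\circ\iota=\iota_X\circ D$, where $\iota_X(x)=(L_x,R_x)$, $L_x(a)=x.a$, $R_x(a)=a.x$. Furthermore: (i) each $(S,T)\in\Delta(X)$ determines a derivation $\mathfrak A\to X$, $a\mapsto S(a)-T(a)$; (ii) if $\overline{\mathfrak A^2}=\mathfrak A$, then $\widetilde D$ is uniquely determined by $D$ (i.e. it is the only derivation $\mathfrak B\to\Delta(X)$ with $\widetilde D\circ\iota=\iota_X\circ D$), and if $\widetilde D$ is inner, then there is $(S,T)\in\Delta(X)$ such that $D(a)=S(a)-T(a)$ for all $a\in\mathfrak A$.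
   Context: For a Banach algebra $\mathfrak A$ and Banach $\mathfrak A$-bimodule $X$: $\mathbf h_{\mathfrak A}(\mathfrak A,X)$ denotes the space of bounded right module maps $S\colon\mathfrak A\to X$ ($S(ab)=S(a).b$), and ${}_{\mathfrak A}\mathbf h(\mathfrak A,X)$ the space of bounded left module maps $T\colon\mathfrak A\to X$ ($T(ab)=a.T(b)$). A double centralizer from $\mathfrak A$ into $X$ is a pair $(S,T)\in \mathbf h_{\mathfrak A}(\mathfrak A,X)\times {}_{\mathfrak A}\mathbf h(\mathfrak A,X)$ with $a.S(\alpha)=T(a).\alpha$ for all $a,\alpha\in\mathfrak A$; the set of these, normed by $\|(S,T)\|=\max\{\|S\|,\|T\|\}$ (operator norms), is denoted $\Delta(X)$. A derivation $D\colon\mathfrak A\to X$ is a bounded linear map with $D(ab)=a.D(b)+D(a).b$; it is inner if $D(a)=a.x-x.a$ for some $x\in X$. $\mathfrak B$ is an envelope of $\mathfrak A$ if $\mathfrak A$ is a (two-sided) ideal of $\mathfrak B$ with bounded inclusion $\iota\colon\mathfrak A\to\mathfrak B$, and there is $C>0$ with $\max\{|ba|,|ab|\}\le C|a|\|b\|$ for $a\in\mathfrak A$, $b\in\mathfrak B$. *)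

(* Defs.v *)
From HB Require Import structures.
From mathcomp Require Import all_boot all_order all_algebra.
From mathcomp Require Import all_classical all_reals all_analysis.
Set Implicit Arguments. Unset Strict Implicit. Unset Printing Implicit Defensive.
Import Order.TTheory GRing.Theory Num.Theory.
Import numFieldNormedType.Exports.
Local Open Scope ring_scope.
Local Open Scope classical_set_scope.

Section BanachDefs.
Context {K : numFieldType}.

Definition lin {U V : lmodType K} (f : U -> V) : Prop :=
  forall (k : K) (u v : U), f (k *: u + v) = k *: f u + f v.

Definition bounded_by {U V : normedModType K} (f : U -> V) (M : K) : Prop :=
  forall u, `|f u| <= M * `|u|.

Definition bounded_lin {U V : normedModType K} (f : U -> V) : Prop :=
  lin f /\ exists C : K, bounded_by f C.

Definition banach_algebra {A : completeNormedModType K} (mul : A -> A -> A) : Prop :=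
  (forall a b c, mul a (mul b c) = mul (mul a b) c) /\
  (forall a, lin (mul a)) /\ (forall b, lin (fun a => mul a b)) /\
  (forall a b, `|mul a b| <= `|a| * `|b|).

Definition banach_bimodule {A X : completeNormedModType K} (mul : A -> A -> A)
  (l : A -> X -> X) (r : X -> A -> X) : Prop :=
  (forall a, lin (l a)) /\ (forall x, lin (fun a => l a x)) /\
  (forall a, lin (fun x => r x a)) /\ (forall x, lin (r x)) /\
  (forall a b x, l (mul a b) x = l a (l b x)) /\
  (forall x a b, r x (mul a b) = r (r x a) b) /\
  (forall a x b, l a (r x b) = r (l a x) b) /\
  (exists C : K, 0 < C /\ forall a x,
      `|l a x| <= C * `|a| * `|x| /\ `|r x a| <= C * `|x| * `|a|).

(* B is an envelope of A: iota is the (injective, bounded, multiplicative)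
   inclusion; A is a two-sided ideal of B, the products b.a and a.b (as
   elements of A) being given by bA and aB; and the norm estimate holds. *)
Definition envelope {A B : completeNormedModType K} (mulA : A -> A -> A)
  (mulB : B -> B -> B) (iota : A -> B) (bA : B -> A -> A) (aB : A -> B -> A) : Prop :=
  bounded_lin iota /\ injective iota /\
  (forall a a', iota (mulA a a') = mulB (iota a) (iota a')) /\
  (forall b a, iota (bA b a) = mulB b (iota a)) /\
  (forall a b, iota (aB a b) = mulB (iota a) b) /\
  (exists C : K, 0 < C /\ forall a b,
      `|bA b a| <= C * `|a| * `|b| /\ `|aB a b| <= C * `|a| * `|b|).

Definition derivation {A X : completeNormedModType K} (mul : A -> A -> A)
  (l : A -> X -> X) (r : X -> A -> X) (D : A -> X) : Prop :=
  bounded_lin D /\ forall a b, D (mul a b) = l a (D b) + r (D a) b.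

Definition dpair (A X : completeNormedModType K) := ((A -> X) * (A -> X))%type.

Definition padd {A X : completeNormedModType K} (p q : dpair A X) : dpair A X :=
  (fun a => p.1 a + q.1 a, fun a => p.2 a + q.2 a).
Definition pscale {A X : completeNormedModType K} (k : K) (p : dpair A X) : dpair A X :=
  (fun a => k *: p.1 a, fun a => k *: p.2 a).
Definition psub {A X : completeNormedModType K} (p q : dpair A X) : dpair A X :=
  (fun a => p.1 a - q.1 a, fun a => p.2 a - q.2 a).
Definition pzero {A X : completeNormedModType K} : dpair A X :=
  (fun _ => 0, fun _ => 0).

(* ||(S,T)|| = max(||S||,||T||) <= M *)
Definition dc_bounded {A X : completeNormedModType K} (p : dpair A X) (M : K) : Prop :=
  bounded_by p.1 M /\ bounded_by p.2 M.

Definition right_map {A X : completeNormedModType K} (mulA : A -> A -> A)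
  (ra : X -> A -> X) (S : A -> X) : Prop :=
  bounded_lin S /\ forall a b, S (mulA a b) = ra (S a) b.
Definition left_map {A X : completeNormedModType K} (mulA : A -> A -> A)
  (la : A -> X -> X) (T : A -> X) : Prop :=
  bounded_lin T /\ forall a b, T (mulA a b) = la a (T b).
Definition is_dc {A X : completeNormedModType K} (mulA : A -> A -> A)
  (la : A -> X -> X) (ra : X -> A -> X) (p : dpair A X) : Prop :=
  right_map mulA ra p.1 /\ left_map mulA la p.2 /\
  forall a alpha, la a (p.1 alpha) = ra (p.2 a) alpha.

Definition dc_lact {A B X : completeNormedModType K} (lB : B -> X -> X)
  (aB : A -> B -> A) (b : B) (p : dpair A X) : dpair A X :=
  (fun a => lB b (p.1 a), fun a => p.2 (aB a b)).
Definition dc_ract {A B X : completeNormedModType K} (rB : X -> B -> X)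
  (bA : B -> A -> A) (p : dpair A X) (b : B) : dpair A X :=
  (fun a => p.1 (bA b a), fun a => rB (p.2 a) b).

Definition iotaX {A X : completeNormedModType K} (la : A -> X -> X)
  (ra : X -> A -> X) (x : X) : dpair A X :=
  (fun a => ra x a, fun a => la a x).

Definition dc_complete {A X : completeNormedModType K} (dc : dpair A X -> Prop) : Prop :=
  forall u : nat -> dpair A X, (forall n, dc (u n)) ->
  (forall e : K, 0 < e -> exists N, forall m n, (N <= m)%N -> (N <= n)%N ->
      dc_bounded (psub (u m) (u n)) e) ->
  exists p, dc p /\ forall e : K, 0 < e -> exists N, forall n, (N <= n)%N ->
      dc_bounded (psub (u n) p) e.

Definition dc_banach_bimodule {A B X : completeNormedModType K}
  (dc : dpair A X -> Prop) (mulB : B -> B -> B)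
  (lact : B -> dpair A X -> dpair A X) (ract : dpair A X -> B -> dpair A X) : Prop :=
  dc pzero /\
  (forall k p q, dc p -> dc q -> dc (padd (pscale k p) q)) /\
  (forall b p, dc p -> dc (lact b p) /\ dc (ract p b)) /\
  (forall k b c p, dc p ->
      lact (k *: b + c) p = padd (pscale k (lact b p)) (lact c p) /\
      ract p (k *: b + c) = padd (pscale k (ract p b)) (ract p c)) /\
  (forall k b p q, dc p -> dc q ->
      lact b (padd (pscale k p) q) = padd (pscale k (lact b p)) (lact b q) /\
      ract (padd (pscale k p) q) b = padd (pscale k (ract p b)) (ract q b)) /\
  (forall b c p, dc p ->
      lact (mulB b c) p = lact b (lact c p) /\
      ract p (mulB b c) = ract (ract p b) c /\
      lact b (ract p c) = ract (lact b p) c) /\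
  (exists C : K, 0 < C /\ forall b p M, dc p -> 0 <= M -> dc_bounded p M ->
      dc_bounded (lact b p) (C * `|b| * M) /\ dc_bounded (ract p b) (C * `|b| * M)) /\
  dc_complete dc.

Definition dc_derivation {A B X : completeNormedModType K}
  (dc : dpair A X -> Prop) (mulB : B -> B -> B)
  (lact : B -> dpair A X -> dpair A X) (ract : dpair A X -> B -> dpair A X)
  (Dt : B -> dpair A X) : Prop :=
  (forall b, dc (Dt b)) /\
  (forall k b c, Dt (k *: b + c) = padd (pscale k (Dt b)) (Dt c)) /\
  (exists C : K, forall b, dc_bounded (Dt b) (C * `|b|)) /\
  (forall b c, Dt (mulB b c) = padd (lact b (Dt c)) (ract (Dt b) c)).

Definition dc_inner {A B X : completeNormedModType K}
  (dc : dpair A X -> Prop)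
  (lact : B -> dpair A X -> dpair A X) (ract : dpair A X -> B -> dpair A X)
  (Dt : B -> dpair A X) : Prop :=
  exists p, dc p /\ forall b, Dt b = psub (lact b p) (ract p b).

Definition dense_square {A : completeNormedModType K} (mulA : A -> A -> A) : Prop :=
  closure [set x | exists s : seq (A * A), x = \sum_(q <- s) mulA q.1 q.2] = setT.

End BanachDefs.

(* Main.v *)
Require Import Defs.
From HB Require Import structures.
From mathcomp Require Import all_boot all_order all_algebra.
From mathcomp Require Import all_classical all_reals all_analysis.
From mathcomp Require Import ring.
Import Order.TTheory GRing.Theory Num.Theory.
Import numFieldNormedType.Exports.
Local Open Scope ring_scope.
Local Open Scope classical_set_scope.
Set Printing Width 150.
Set Implicit Arguments. Unset Strict Implicit. Unset Printing Implicit Defensive.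

Section Gen.
Context {K : numFieldType}.

Lemma lin0 (U V : lmodType K) (f : U -> V) : lin f -> f 0 = 0.
Proof.
move=> hf; have := hf 1 0 0; rewrite !scale1r addr0 => h.
by apply: (@addrI _ (f 0)); rewrite addr0 -h.
Qed.

Lemma linD (U V : lmodType K) (f : U -> V) : lin f -> forall u v, f (u + v) = f u + f v.
Proof. by move=> hf u v; have := hf 1 u v; rewrite !scale1r. Qed.

Lemma linZ (U V : lmodType K) (f : U -> V) : lin f -> forall k u, f (k *: u) = k *: f u.
Proof. by move=> hf k u; rewrite -[k *: u]addr0 hf (lin0 hf) addr0. Qed.

Lemma linN (U V : lmodType K) (f : U -> V) : lin f -> forall u, f (- u) = - f u.
Proof. by move=> hf u; rewrite -scaleN1r (linZ hf) scaleN1r. Qed.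

Lemma linB (U V : lmodType K) (f : U -> V) : lin f -> forall u v, f (u - v) = f u - f v.
Proof. by move=> hf u v; rewrite (linD hf) (linN hf). Qed.

Lemma bounded_pos (U V : normedModType K) (f : U -> V) M :
  bounded_by f M -> exists M', 0 < M' /\ bounded_by f M'.
Proof.
move=> hf; exists (`|M| + 1); split; first by rewrite ltr_wpDl.
move=> u; apply: (le_trans (hf u)).
have h0 : 0 <= M * `|u| by apply: le_trans (hf u).
rewrite -(ger0_norm h0) normrM normr_id ler_wpM2r //.
by rewrite lerDl.
Qed.

Lemma blin_cvg (U V : normedModType K) (f : U -> V) (v : nat -> U) (y : U) :
  bounded_lin f -> v n @[n --> \oo] --> y -> f (v n) @[n --> \oo] --> f y.
Proof.
move=> [hl [M hM]] hv; have [M' [M'0 hM']] := bounded_pos hM.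
apply/(@cvgrPdist_lt _ _ _ _ _ (fun n => f (v n))) => e e0.
have := (@cvgrPdist_lt _ _ _ _ _ v y).1 hv (e / M') (divr_gt0 e0 M'0).
case=> N _ HN; exists N => // n /= hn; have := HN n hn => /= {}hn.
rewrite -(linB hl); apply: le_lt_trans (hM' _) _.
by rewrite mulrC -ltr_pdivlMr.
Qed.

Lemma cauchy_seq_cvg (V : completeNormedModType K) (v : nat -> V) :
  (forall e : K, 0 < e -> exists N, forall m n, (N <= m)%N -> (N <= n)%N -> `|v m - v n| <= e) ->
  cvg (v n @[n --> \oo]).
Proof.
move=> hc; apply: cauchy_cvg; apply/cauchyP => e e0.
have [N hN] := hc (e / 2) (divr_gt0 e0 (ltr0Sn _ 1)).
exists (v N); exists N => // n /= hn.
rewrite -ball_normE /ball_ /=; apply: le_lt_trans (hN _ _ (leqnn N) hn) _.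
by rewrite ltr_pdivrMr // ltr_pMr // ltr1n.
Qed.

Lemma lim_bound (V : normedModType K) (v : nat -> V) (y : V) N (e : K) :
  v n @[n --> \oo] --> y ->
  (forall m n, (N <= m)%N -> (N <= n)%N -> `|v m - v n| <= e) ->
  forall n, (N <= n)%N -> `|v n - y| <= e.
Proof.
move=> hv hN n hn; apply/ler_addgt0Pr => d d0.
have [N' _ HN'] := (@cvgrPdist_lt _ _ _ _ _ v y).1 hv d d0.
pose m := maxn N N'.
have h1 : `|y - v m| < d by apply: HN'; rewrite /= leq_maxr.
rewrite -(subrK (v m) (v n)) -addrA.
apply: (le_trans (ler_normD _ _)); apply: lerD.
  by apply: hN => //; rewrite leq_maxl.
by rewrite distrC ltW.
Qed.

Lemma lim_eq (V : normedModType K) (v : nat -> V) (y z : V) :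
  v n @[n --> \oo] --> y -> v n @[n --> \oo] --> z -> y = z.
Proof.
move=> hy hz; exact: (cvg_unique (@norm_hausdorff K V) hy hz).
Qed.

Lemma closure_eq (U V : normedModType K) (f g : U -> V) (S : set U) :
  bounded_lin f -> bounded_lin g -> closure S = setT ->
  (forall x, S x -> f x = g x) -> f = g.
Proof.
move=> [lf [Mf hMf]] [lg [Mg hMg]] hS hfg.
have [M1 [M10 hM1]] := bounded_pos hMf.
have [M2 [M20 hM2]] := bounded_pos hMg.
apply: funext => x; apply/eqP; rewrite -subr_eq0 -normr_le0.
apply/ler_addgt0Pr => e e0; rewrite add0r.
have : closure S x by rewrite hS.
have hM : 0 < M1 + M2 by rewrite addr_gt0.
move=> /(_ (ball x (e / (M1 + M2))) (nbhsx_ballx _ _ (divr_gt0 e0 hM))) [y [Sy]].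
rewrite -ball_normE /ball_ /= => hxy.
have -> : f x - g x = f (x - y) - g (x - y).
  by rewrite (linB lf) (linB lg) (hfg y Sy) opprB addrA subrK.
apply: le_trans (ler_normB _ _) _.
apply: le_trans (lerD (hM1 _) (hM2 _)) _.
rewrite -mulrDl mulrC -ler_pdivlMr //; exact: ltW.
Qed.


Lemma bl_comb (U V : normedModType K) (f g : U -> V) (k : K) :
  bounded_lin f -> bounded_lin g -> bounded_lin (fun u => k *: f u + g u).
Proof.
move=> [lf [Mf hMf]] [lg [Mg hMg]].
have [M1 [M10 hM1]] := bounded_pos hMf.
have [M2 [M20 hM2]] := bounded_pos hMg.
split.
  move=> c u v; rewrite lf lg !scalerDr !scalerA mulrC addrACA.
  by congr (_ + _); rewrite addrC [c * k]mulrC.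
exists (`|k| * M1 + M2) => u.
apply: le_trans (ler_normD _ _) _; rewrite normrZ mulrDl -mulrA.
by apply: lerD => //; apply: ler_wpM2l.
Qed.

Lemma unif_lim (U : normedModType K) (V : completeNormedModType K) (f : nat -> U -> V) :
  (forall n, bounded_lin (f n)) ->
  (forall e : K, 0 < e -> exists N, forall m n, (N <= m)%N -> (N <= n)%N ->
      bounded_by (fun a => f m a - f n a) e) ->
  exists F, bounded_lin F /\ (forall a, f n a @[n --> \oo] --> F a) /\
    (forall e : K, 0 < e -> exists N, forall n, (N <= n)%N -> bounded_by (fun a => f n a - F a) e).
Proof.
move=> hbl hC.
have hcv : forall a, cvg (f n a @[n --> \oo]).
  move=> a; apply: cauchy_seq_cvg => e e0.
  have ha : 0 < `|a| + 1 by rewrite ltr_wpDl.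
  have [N hN] := hC (e / (`|a| + 1)) (divr_gt0 e0 ha).
  exists N => m n hm hn; apply: le_trans (hN m n hm hn a) _.
  rewrite -mulrA ler_piMr ?(ltW e0) // ler_pdivrMl // mulr1.
  by rewrite lerDl.
pose F a := lim (f n a @[n --> \oo]).
have hF : forall a, f n a @[n --> \oo] --> F a by move=> a; exact: hcv.
have hconv : forall e : K, 0 < e -> exists N, forall n, (N <= n)%N -> bounded_by (fun a => f n a - F a) e.
  move=> e e0; have [N hN] := hC e e0; exists N => n hn a.
  by apply: (lim_bound (hF a)) hn => m m' hm hm'; apply: hN.
exists F; split; last by split.
split.
  move=> k a b.
  apply: (lim_eq (hF (k *: a + b))).
  have -> : (fun n => f n (k *: a + b)) = (fun n => k *: f n a + f n b).
    by apply: funext => n; case: (hbl n) => ->.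
  exact: (cvgD (cvgZr (hF a)) (hF b)).
have [N hN] := hconv 1 ltr01.
case: (hbl N) => _ [MN hMN]; have [M [M0 hM]] := bounded_pos hMN.
exists (1 + M) => a.
rewrite -(subrK (f N a) (F a)) mulrDl.
apply: le_trans (ler_normD _ _) _; apply: lerD => //.
by rewrite -normrN opprB; apply: hN.
Qed.

Lemma bl_comp (U V W : normedModType K) (f : U -> V) (g : V -> W) :
  bounded_lin f -> bounded_lin g -> bounded_lin (fun u => g (f u)).
Proof.
move=> [lf [Mf hMf]] [lg [Mg hMg]].
have [M1 [M10 hM1]] := bounded_pos hMf.
have [M2 [M20 hM2]] := bounded_pos hMg.
split; first by move=> k u v; rewrite lf lg.
exists (M2 * M1) => u; apply: le_trans (hM2 _) _.
by rewrite -mulrA; apply: ler_wpM2l; [exact: ltW | exact: hM1].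
Qed.

Lemma bl_zero (U V : normedModType K) : bounded_lin (fun _ : U => 0 : V).
Proof.
split; first by move=> k u v; rewrite scaler0 addr0.
by exists 0 => u; rewrite normr0 mul0r.
Qed.

Lemma bl_sub (U V : normedModType K) (f g : U -> V) :
  bounded_lin f -> bounded_lin g -> bounded_lin (fun u => f u - g u).
Proof.
move=> hf hg; have := bl_comb (-1) hg hf.
have -> // : (fun u => -1 *: g u + f u) = (fun u => f u - g u).
by apply: funext => u; rewrite scaleN1r addrC.
Qed.

Lemma bl_opp (U V : normedModType K) (f : U -> V) :
  bounded_lin f -> bounded_lin (fun u => - f u).
Proof.
move=> hf; have := bl_sub (@bl_zero U V) hf.
have -> // : (fun u => (0 : V) - f u) = (fun u => - f u).
by apply: funext => u; rewrite sub0r.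
Qed.

Lemma leq4 (c1 C x M y : K) : 0 <= x -> 0 <= M -> 0 <= y -> c1 <= C ->
  c1 * x * M * y <= C * x * M * y.
Proof.
move=> x0 M0 y0 hc; apply: ler_wpM2r => //; apply: ler_wpM2r => //.
exact: ler_wpM2r.
Qed.

End Gen.

Lemma pair_ext {K : numFieldType} (A X : completeNormedModType K) (p q : Defs.dpair A X) :
  (forall a, p.1 a = q.1 a) -> (forall a, p.2 a = q.2 a) -> p = q.
Proof.
case: p q => [p1 p2] [q1 q2] /= h1 h2.
by congr pair; apply: funext.
Qed.

Section Main.
Context {K : numFieldType} (A B X : completeNormedModType K)
  (mulA : A -> A -> A) (mulB : B -> B -> B) (iota : A -> B)
  (bA : B -> A -> A) (aB : A -> B -> A) (lB : B -> X -> X) (rB : X -> B -> X)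
  (HA : banach_algebra mulA) (HB : banach_algebra mulB)
  (HE : envelope mulA mulB iota bA aB) (HX : banach_bimodule mulB lB rB).

Lemma assA a b c : mulA a (mulA b c) = mulA (mulA a b) c.
Proof. by case: HA. Qed.
Lemma assB a b c : mulB a (mulB b c) = mulB (mulB a b) c.
Proof. by case: HB. Qed.
Lemma mulBlr a : lin (mulB a).
Proof. by case: HB => _ []. Qed.
Lemma mulBll b : lin (fun a => mulB a b).
Proof. by case: HB => _ [_ []]. Qed.
Lemma iota_bl : bounded_lin iota.
Proof. by case: HE. Qed.
Lemma iota_lin : lin iota.
Proof. by case: iota_bl. Qed.
Lemma iota_inj : injective iota.
Proof. by case: HE => _ []. Qed.
Lemma iotaM a a' : iota (mulA a a') = mulB (iota a) (iota a').
Proof. by case: HE => _ [_ []]. Qed.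
Lemma iota_bA b a : iota (bA b a) = mulB b (iota a).
Proof. by case: HE => _ [_ [_ []]]. Qed.
Lemma iota_aB a b : iota (aB a b) = mulB (iota a) b.
Proof. by case: HE => _ [_ [_ [_ []]]]. Qed.
Lemma env_bnd : exists C : K, 0 < C /\ forall a b,
      `|bA b a| <= C * `|a| * `|b| /\ `|aB a b| <= C * `|a| * `|b|.
Proof. by case: HE => _ [_ [_ [_ []]]]. Qed.

Lemma lB_lin b : lin (lB b).
Proof. by case: HX. Qed.
Lemma lB_linl x : lin (fun b => lB b x).
Proof. by case: HX => _ []. Qed.
Lemma rB_lin b : lin (fun x => rB x b).
Proof. by case: HX => _ [_ []]. Qed.
Lemma rB_linr x : lin (rB x).
Proof. by case: HX => _ [_ [_ []]]. Qed.
Lemma lBM b c x : lB (mulB b c) x = lB b (lB c x).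
Proof. by case: HX => _ [_ [_ [_ []]]]. Qed.
Lemma rBM x b c : rB x (mulB b c) = rB (rB x b) c.
Proof. by case: HX => _ [_ [_ [_ [_ []]]]]. Qed.
Lemma lrB b x c : lB b (rB x c) = rB (lB b x) c.
Proof. by case: HX => _ [_ [_ [_ [_ [_ []]]]]]. Qed.
Lemma X_bnd : exists C : K, 0 < C /\ forall a x,
      `|lB a x| <= C * `|a| * `|x| /\ `|rB x a| <= C * `|x| * `|a|.
Proof. by case: HX => _ [_ [_ [_ [_ [_ []]]]]]. Qed.

Lemma lB_bl b : bounded_lin (lB b).
Proof.
split; first exact: lB_lin.
have [C [C0 hC]] := X_bnd; exists (C * `|b|) => x; exact: (hC b x).1.
Qed.
Lemma rB_bl b : bounded_lin (fun x => rB x b).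
Proof.
split; first exact: rB_lin.
have [C [C0 hC]] := X_bnd; exists (C * `|b|) => x.
by rewrite mulrAC; exact: (hC b x).2.
Qed.

Ltac inj := apply: iota_inj; rewrite ?iotaM ?iota_bA ?iota_aB ?iotaM ?iota_bA ?iota_aB ?iotaM.

Lemma bA_linl a : lin (fun b => bA b a).
Proof.
by move=> k b c; inj; rewrite ?iota_lin ?iota_bA ?iota_lin ?iota_bA ?mulBll.
Qed.
Lemma bA_linr b : lin (bA b).
Proof.
by move=> k a c; inj; rewrite ?iota_lin ?iota_bA ?iota_lin ?iota_bA ?mulBlr.
Qed.
Lemma aB_linl b : lin (fun a => aB a b).
Proof.
by move=> k a c; inj; rewrite ?iota_lin ?iota_aB ?iota_lin ?iota_aB ?mulBll.
Qed.
Lemma aB_linr a : lin (aB a).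
Proof.
by move=> k b c; inj; rewrite ?iota_lin ?iota_aB ?iota_lin ?iota_aB ?mulBlr.
Qed.
Lemma bA_iota a0 a : bA (iota a0) a = mulA a0 a.
Proof. by inj. Qed.
Lemma aB_iota a a0 : aB a (iota a0) = mulA a a0.
Proof. by inj. Qed.
Lemma bA_mul b c a : bA (mulB b c) a = bA b (bA c a).
Proof. by inj; rewrite ?assB. Qed.
Lemma aB_mul a b c : aB a (mulB b c) = aB (aB a b) c.
Proof. by inj; rewrite ?assB. Qed.
Lemma aB_mulA a a' b : aB (mulA a a') b = mulA a (aB a' b).
Proof. by inj; rewrite ?assB. Qed.
Lemma bA_mulA b a a' : bA b (mulA a a') = mulA (bA b a) a'.
Proof. by inj; rewrite ?assB. Qed.
Lemma mid a b c : mulA a (bA b c) = mulA (aB a b) c.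
Proof. by inj; rewrite ?assB. Qed.

Lemma rBl k x y b : rB (k *: x + y) b = k *: rB x b + rB y b.
Proof. exact: (rB_lin b). Qed.
Lemma rBr k x b c : rB x (k *: b + c) = k *: rB x b + rB x c.
Proof. exact: (rB_linr x). Qed.
Lemma lBl k b c x : lB (k *: b + c) x = k *: lB b x + lB c x.
Proof. exact: (lB_linl x). Qed.
Lemma lBr k b x y : lB b (k *: x + y) = k *: lB b x + lB b y.
Proof. exact: (lB_lin b). Qed.
Lemma bAl k b c a : bA (k *: b + c) a = k *: bA b a + bA c a.
Proof. exact: (bA_linl a). Qed.
Lemma aBr k a b c : aB a (k *: b + c) = k *: aB a b + aB a c.
Proof. exact: (aB_linr a). Qed.
Lemma rBB x y b : rB (x - y) b = rB x b - rB y b.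
Proof. exact: (linB (rB_lin b)). Qed.
Lemma lBB b x y : lB b (x - y) = lB b x - lB b y.
Proof. exact: (linB (lB_lin b)). Qed.
Lemma rBN x b : rB (- x) b = - rB x b.
Proof. exact: (linN (rB_lin b)). Qed.
Lemma lBN b x : lB b (- x) = - lB b x.
Proof. exact: (linN (lB_lin b)). Qed.
Lemma rBD x y b : rB (x + y) b = rB x b + rB y b.
Proof. exact: (linD (rB_lin b)). Qed.
Lemma lBD b x y : lB b (x + y) = lB b x + lB b y.
Proof. exact: (linD (lB_lin b)). Qed.
Lemma rB0 b : rB 0 b = 0.
Proof. exact: (lin0 (rB_lin b)). Qed.
Lemma lB0 b : lB b 0 = 0.
Proof. exact: (lin0 (lB_lin b)). Qed.

Lemma aB_bl b : bounded_lin (fun a => aB a b).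
Proof.
split; first exact: aB_linl.
have [C [C0 hC]] := env_bnd; exists (C * `|b|) => a.
by rewrite mulrAC; exact: (hC a b).2.
Qed.
Lemma bA_bl b : bounded_lin (bA b).
Proof.
split; first exact: bA_linr.
have [C [C0 hC]] := env_bnd; exists (C * `|b|) => a.
by rewrite mulrAC; exact: (hC a b).1.
Qed.

Local Notation dc := (is_dc mulA (fun a x => lB (iota a) x) (fun x a => rB x (iota a))).

Lemma part1 : banach_bimodule mulA (fun a x => lB (iota a) x) (fun x a => rB x (iota a)).
Proof.
split; first by move=> a; exact: lB_lin.
split; first by move=> x k a a'; rewrite /= iota_lin lBl.
split; first by move=> a; exact: rB_lin.
split; first by move=> x k a a'; rewrite /= iota_lin rBr.
split; first by move=> a b x; rewrite /= iotaM lBM.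
split; first by move=> x a b; rewrite /= iotaM rBM.
split; first by move=> a x b; rewrite /= lrB.
have [C [C0 hC]] := X_bnd.
case: iota_bl => _ [Ci hCi]; have [Ci' [Ci0 hi]] := bounded_pos hCi.
exists (C * Ci'); split; first by rewrite mulr_gt0.
move=> a x; split.
- apply: le_trans (hC _ _).1 _.
  rewrite -(mulrA C Ci'); apply: ler_wpM2r => //; apply: ler_wpM2l; [exact: ltW | exact: hi].
- apply: le_trans (hC _ _).2 _.
  rewrite [C * Ci' * _]mulrAC -(mulrA (C * `|x|)); apply: ler_wpM2l; [by rewrite mulr_ge0 // ltW | exact: hi].
Qed.

Lemma dc_zero : dc pzero.
Proof.
split; [|split].
- split; first exact: bl_zero.
  by move=> a b /=; rewrite rB0.
- split; first exact: bl_zero.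
  by move=> a b /=; rewrite lB0.
- by move=> a b /=; rewrite lB0 rB0.
Qed.

Lemma dc_comb k p q : dc p -> dc q -> dc (padd (pscale k p) q).
Proof.
move=> [[bp1 ep1] [[bp2 ep2] cp]] [[bq1 eq1] [[bq2 eq2] cq]].
split; [|split].
- split; first exact: bl_comb.
  by move=> a b /=; rewrite ep1 eq1 rBl.
- split; first exact: bl_comb.
  by move=> a b /=; rewrite ep2 eq2 lBr.
- move=> a al /=; rewrite lBr rBl.
  by move: (cp a al) (cq a al) => /= -> ->.
Qed.

Lemma dc_lactS b p : dc p -> dc (dc_lact lB aB b p).
Proof.
move=> [[bp1 ep1] [[bp2 ep2] cp]].
split; [|split].
- split; first exact: bl_comp bp1 (lB_bl b).
  by move=> a a' /=; rewrite ep1 lrB.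
- split; first exact: bl_comp (aB_bl b) bp2.
  by move=> a a' /=; rewrite aB_mulA ep2.
- move=> a al /=; move: (cp (aB a b) al) => /= <-.
  by rewrite iota_aB lBM.
Qed.

Lemma dc_ractS b p : dc p -> dc (dc_ract rB bA p b).
Proof.
move=> [[bp1 ep1] [[bp2 ep2] cp]].
split; [|split].
- split; first exact: bl_comp (bA_bl b) bp1.
  by move=> a a' /=; rewrite bA_mulA ep1.
- split; first exact: bl_comp bp2 (rB_bl b).
  by move=> a a' /=; rewrite ep2 lrB.
- move=> a al /=; move: (cp a (bA b al)) => /= ->.
  by rewrite iota_bA rBM.
Qed.

Lemma dc_lin1 p : dc p -> lin p.1.
Proof. by case=> [[[]]]. Qed.
Lemma dc_lin2 p : dc p -> lin p.2.
Proof. by case=> _ [[[]]]. Qed.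

Lemma part_bilin1 k b c p : dc p ->
  dc_lact lB aB (k *: b + c) p = padd (pscale k (dc_lact lB aB b p)) (dc_lact lB aB c p) /\
  dc_ract rB bA p (k *: b + c) = padd (pscale k (dc_ract rB bA p b)) (dc_ract rB bA p c).
Proof.
move=> hp; split; apply: pair_ext => a /=.
- exact: lBl.
- by rewrite aBr (dc_lin2 hp).
- by rewrite bAl (dc_lin1 hp).
- exact: rBr.
Qed.

Lemma part_bilin2 k b p q : dc p -> dc q ->
  dc_lact lB aB b (padd (pscale k p) q) = padd (pscale k (dc_lact lB aB b p)) (dc_lact lB aB b q) /\
  dc_ract rB bA (padd (pscale k p) q) b = padd (pscale k (dc_ract rB bA p b)) (dc_ract rB bA q b).
Proof.
move=> hp hq; split; apply: pair_ext => a //=.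
- exact: lBr.
- exact: rBl.
Qed.

Lemma part_bimod b c p : dc p ->
  dc_lact lB aB (mulB b c) p = dc_lact lB aB b (dc_lact lB aB c p) /\
  dc_ract rB bA p (mulB b c) = dc_ract rB bA (dc_ract rB bA p b) c /\
  dc_lact lB aB b (dc_ract rB bA p c) = dc_ract rB bA (dc_lact lB aB b p) c.
Proof.
move=> hp; split; [|split]; apply: pair_ext => a //=.
- exact: lBM.
- by rewrite aB_mul.
- by rewrite bA_mul.
- exact: rBM.
Qed.

Lemma part_norm : exists C : K, 0 < C /\ forall b p M, dc p -> 0 <= M -> dc_bounded p M ->
      dc_bounded (dc_lact lB aB b p) (C * `|b| * M) /\ dc_bounded (dc_ract rB bA p b) (C * `|b| * M).
Proof.
have [Cx [Cx0 hCx]] := X_bnd.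
have [Ce [Ce0 hCe]] := env_bnd.
exists (Cx + Ce); split; first by rewrite addr_gt0.
have h1 : Cx <= Cx + Ce by rewrite lerDl ltW.
have h2 : Ce <= Cx + Ce by rewrite lerDr ltW.
move=> b p M hp M0 [hM1 hM2]; split; split => a /=.
- apply: le_trans (hCx _ _).1 _.
  apply: le_trans (_ : Cx * `|b| * (M * `|a|) <= _).
    by apply: ler_wpM2l; [rewrite mulr_ge0 // ltW | exact: hM1].
  by rewrite mulrA; apply: leq4.
- apply: le_trans (hM2 _) _.
  apply: le_trans (_ : M * (Ce * `|a| * `|b|) <= _).
    by apply: ler_wpM2l => //; exact: (hCe _ _).2.
  have -> : M * (Ce * `|a| * `|b|) = Ce * `|b| * M * `|a| by ring.
  exact: leq4.
- apply: le_trans (hM1 _) _.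
  apply: le_trans (_ : M * (Ce * `|a| * `|b|) <= _).
    by apply: ler_wpM2l => //; exact: (hCe _ _).1.
  have -> : M * (Ce * `|a| * `|b|) = Ce * `|b| * M * `|a| by ring.
  exact: leq4.
- apply: le_trans (hCx _ _).2 _.
  apply: le_trans (_ : Cx * (M * `|a|) * `|b| <= _).
    by apply: ler_wpM2r => //; apply: ler_wpM2l; [exact: ltW | exact: hM2].
  have -> : Cx * (M * `|a|) * `|b| = Cx * `|b| * M * `|a| by ring.
  exact: leq4.
Qed.

Lemma part_complete : dc_complete dc.
Proof.
move=> u hu hC.
have [F1 [bF1 [cF1 uF1]]] := @unif_lim K A X (fun n => (u n).1) (fun n => (hu n).1.1)
  (fun e e0 => let: ex_intro N hN := hC e e0 in
     ex_intro _ N (fun m n hm hn => (hN m n hm hn).1)).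
have [F2 [bF2 [cF2 uF2]]] := @unif_lim K A X (fun n => (u n).2) (fun n => (hu n).2.1.1)
  (fun e e0 => let: ex_intro N hN := hC e e0 in
     ex_intro _ N (fun m n hm hn => (hN m n hm hn).2)).
exists (F1, F2); split.
  split; [|split].
  - split => // a a' /=.
    apply: (lim_eq (cF1 (mulA a a'))).
    have -> : (fun n => (u n).1 (mulA a a')) = (fun n => rB ((u n).1 a) (iota a')).
      by apply: funext => n; case: (hu n) => [[_ ->]].
    exact: (blin_cvg (rB_bl (iota a')) (cF1 a)).
  - split => // a a' /=.
    apply: (lim_eq (cF2 (mulA a a'))).
    have -> : (fun n => (u n).2 (mulA a a')) = (fun n => lB (iota a) ((u n).2 a')).
      by apply: funext => n; case: (hu n) => _ [[_ ->]].
    exact: (blin_cvg (lB_bl (iota a)) (cF2 a')).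
  - move=> a al /=.
    apply: (lim_eq (blin_cvg (lB_bl (iota a)) (cF1 al))).
    have -> : (fun n => lB (iota a) ((u n).1 al)) = (fun n => rB ((u n).2 a) (iota al)).
      by apply: funext => n; case: (hu n) => _ [_ /= ->].
    exact: (blin_cvg (rB_bl (iota al)) (cF2 a)).
move=> e e0.
have [N1 hN1] := uF1 e e0; have [N2 hN2] := uF2 e e0.
exists (maxn N1 N2) => n hn; split.
- by apply: hN1; apply: leq_trans hn; rewrite leq_maxl.
- by apply: hN2; apply: leq_trans hn; rewrite leq_maxr.
Qed.

Lemma part2 : dc_banach_bimodule dc mulB (dc_lact lB aB) (dc_ract rB bA).
Proof.
split; first exact: dc_zero.
split; first by move=> k p q; exact: dc_comb.
split; first by move=> b p hp; split; [exact: dc_lactS | exact: dc_ractS].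
split; first by move=> k b c p; exact: part_bilin1.
split; first by move=> k b p q; exact: part_bilin2.
split; first by move=> b c p; exact: part_bimod.
split; first exact: part_norm.
exact: part_complete.
Qed.

Lemma part3 p : dc p ->
  derivation mulA (fun a x => lB (iota a) x) (fun x a => rB x (iota a)) (fun a => p.1 a - p.2 a).
Proof.
move=> [[bp1 ep1] [[bp2 ep2] cp]]; split; first exact: bl_sub.
move=> a b /=; rewrite ep1 ep2 lBB rBB.
move: (cp a b) => /= ->.
by rewrite [RHS]addrC addrA subrK.
Qed.

Section Der.
Variable D : A -> X.
Hypothesis hD : derivation mulA (fun a x => lB (iota a) x) (fun x a => rB x (iota a)) D.

Lemma Dbl : bounded_lin D.
Proof. by case: hD. Qed.
Lemma Dlin : lin D.
Proof. by case: Dbl. Qed.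
Lemma Dmul a b : D (mulA a b) = lB (iota a) (D b) + rB (D a) (iota b).
Proof. by case: hD. Qed.

Definition Dt (b : B) : Defs.dpair A X :=
  (fun a => D (bA b a) - lB b (D a), fun a => D (aB a b) - rB (D a) b).

Lemma Dt_dc b : dc (Dt b).
Proof.
split; [|split].
- split; first exact: bl_sub (bl_comp (bA_bl b) Dbl) (bl_comp Dbl (lB_bl b)).
  move=> a a' /=; rewrite bA_mulA !Dmul iota_bA lBM lBD lrB rBB.
  by rewrite opprD addrACA subrr add0r.
- split; first exact: bl_sub (bl_comp (aB_bl b) Dbl) (bl_comp Dbl (rB_bl b)).
  move=> a a' /=; rewrite aB_mulA !Dmul iota_aB rBM rBD lBB lrB.
  by rewrite opprD addrACA subrr addr0.
- move=> a al /=.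
  have hm := congr1 D (mid a b al); rewrite !Dmul iota_bA rBM in hm.
  rewrite lBB -lBM -iota_aB.
  set W := lB (iota (aB a b)) (D al) in hm *.
  set Y := rB (D (aB a b)) (iota al) in hm *.
  set Z := rB (rB (D a) b) (iota al) in hm *.
  rewrite rBB -/Z.
  have -> : lB (iota a) (D (bA b al)) = W + Y - Z by rewrite -hm addrK.
  by rewrite addrAC [W + Y]addrC addrK.
Qed.

Lemma Dt_lin k b c : Dt (k *: b + c) = padd (pscale k (Dt b)) (Dt c).
Proof.
apply: pair_ext => a /=.
- by rewrite bAl Dlin lBl scalerBr opprD addrACA.
- by rewrite aBr Dlin rBr scalerBr opprD addrACA.
Qed.

Lemma Dt_bnd : exists C : K, forall b, dc_bounded (Dt b) (C * `|b|).
Proof.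
have [Cx [Cx0 hCx]] := X_bnd.
have [Ce [Ce0 hCe]] := env_bnd.
case: Dbl => _ [M0 hM0]; have [M [Mp hM]] := bounded_pos hM0.
exists (M * Ce + Cx * M) => b; split => a /=.
- apply: le_trans (ler_normB _ _) _.
  apply: le_trans (_ : M * (Ce * `|a| * `|b|) + Cx * `|b| * (M * `|a|) <= _).
    apply: lerD.
      apply: le_trans (hM _) _; apply: ler_wpM2l; [exact: ltW | exact: (hCe _ _).1].
    apply: le_trans (hCx _ _).1 _; apply: ler_wpM2l; [by rewrite mulr_ge0 // ltW | exact: hM].
  by rewrite le_eqVlt; apply/orP; left; apply/eqP; ring.
- apply: le_trans (ler_normB _ _) _.
  apply: le_trans (_ : M * (Ce * `|a| * `|b|) + Cx * (M * `|a|) * `|b| <= _).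
    apply: lerD.
      apply: le_trans (hM _) _; apply: ler_wpM2l; [exact: ltW | exact: (hCe _ _).2].
    apply: le_trans (hCx _ _).2 _; apply: ler_wpM2r => //; apply: ler_wpM2l; [exact: ltW | exact: hM].
  by rewrite le_eqVlt; apply/orP; left; apply/eqP; ring.
Qed.

Lemma Dt_der b c : Dt (mulB b c) = padd (dc_lact lB aB b (Dt c)) (dc_ract rB bA (Dt b) c).
Proof.
apply: pair_ext => a /=.
- by rewrite bA_mul lBM lBB [RHS]addrC addrA subrK.
- by rewrite aB_mul rBM rBB addrA subrK.
Qed.

Lemma Dt_iota a : Dt (iota a) = iotaX (fun a x => lB (iota a) x) (fun x a => rB x (iota a)) (D a).
Proof.
apply: pair_ext => a' /=.
- by rewrite bA_iota Dmul addrAC subrr add0r.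
- by rewrite aB_iota Dmul addrK.
Qed.

Lemma Dt_deriv : dc_derivation dc mulB (dc_lact lB aB) (dc_ract rB bA) Dt.
Proof.
split; first exact: Dt_dc.
split; first exact: Dt_lin.
split; first exact: Dt_bnd.
exact: Dt_der.
Qed.

Lemma form1 D' : dc_derivation dc mulB (dc_lact lB aB) (dc_ract rB bA) D' ->
  (forall a, D' (iota a) = iotaX (fun a x => lB (iota a) x) (fun x a => rB x (iota a)) (D a)) ->
  forall b a a', (D' b).1 (mulA a a') = rB (D (bA b a)) (iota a') - lB b (rB (D a) (iota a')).
Proof.
move=> [_ [_ [_ hder]]] hval b a a'.
have E := congr1 (fun p : Defs.dpair A X => p.1 a') (hder b (iota a)).
rewrite -iota_bA !hval /= bA_iota in E.
by rewrite E addrAC subrr add0r.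
Qed.

Lemma form2 D' : dc_derivation dc mulB (dc_lact lB aB) (dc_ract rB bA) D' ->
  (forall a, D' (iota a) = iotaX (fun a x => lB (iota a) x) (fun x a => rB x (iota a)) (D a)) ->
  forall b a a', (D' b).2 (mulA a' a) = lB (iota a') (D (aB a b)) - rB (lB (iota a') (D a)) b.
Proof.
move=> [_ [_ [_ hder]]] hval b a a'.
have E := congr1 (fun p : Defs.dpair A X => p.2 a') (hder (iota a) b).
rewrite -iota_aB !hval /= aB_iota in E.
by rewrite E addrK.
Qed.

Lemma unique_part (hds : dense_square mulA) D' :
  dc_derivation dc mulB (dc_lact lB aB) (dc_ract rB bA) D' ->
  (forall a, D' (iota a) = iotaX (fun a x => lB (iota a) x) (fun x a => rB x (iota a)) (D a)) ->
  D' = Dt.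
Proof.
move=> hD' hval.
have hDt := Dt_deriv; have hvt := Dt_iota.
apply: funext => b.
have [[b1 _] [[b2 _] _]] := hD'.1 b.
have [[c1 _] [[c2 _] _]] := Dt_dc b.
have h1 : (D' b).1 = (Dt b).1.
  apply: (closure_eq b1 c1 hds) => _ [s ->].
  elim: s => [|q s IH]; first by rewrite !big_nil (lin0 b1.1) (lin0 c1.1).
  rewrite !big_cons (linD b1.1) (linD c1.1) IH.
  by rewrite (form1 hD' hval) (form1 hDt hvt).
have h2 : (D' b).2 = (Dt b).2.
  apply: (closure_eq b2 c2 hds) => _ [s ->].
  elim: s => [|q s IH]; first by rewrite !big_nil (lin0 b2.1) (lin0 c2.1).
  rewrite !big_cons (linD b2.1) (linD c2.1) IH.
  by rewrite (form2 hD' hval) (form2 hDt hvt).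
by apply: pair_ext => a; rewrite ?h1 ?h2.
Qed.

Lemma inner_part : dc_inner dc (dc_lact lB aB) (dc_ract rB bA) Dt ->
  exists p, dc p /\ forall a, D a = p.1 a - p.2 a.
Proof.
move=> [p [hp hDt]].
have hi : forall a a', rB (D a) (iota a') = lB (iota a) (p.1 a') - p.1 (mulA a a').
  move=> a a'; have := congr1 (fun q : Defs.dpair A X => q.1 a') (hDt (iota a)).
  by rewrite Dt_iota /= bA_iota.
case: hp => [[bp1 ep1] [[bp2 ep2] cp]].
exists (fun a => - p.1 a, fun a => - p.1 a - D a); split; last first.
  by move=> a /=; rewrite opprB addrC subrK.
split; [|split].
- split; first exact: bl_opp.
  by move=> a a' /=; rewrite ep1 rBN.
- split; first exact: bl_sub (bl_opp bp1) Dbl.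
  move=> a a' /=; rewrite Dmul hi lBB lBN.
  set P := p.1 (mulA a a'); set Q := lB (iota a) (D a'); set R := lB (iota a) (p.1 a').
  by rewrite opprD opprB !addrA (addrAC (- P)) addNr add0r addrC.
- move=> a al /=.
  by rewrite lBN rBB rBN hi ep1 opprB addKr.
Qed.

End Der.

End Main.

Theorem theorem1p3 (K : numFieldType) (A B X : completeNormedModType K)
  (mulA : A -> A -> A) (mulB : B -> B -> B) (iota : A -> B)
  (bA : B -> A -> A) (aB : A -> B -> A)
  (lB : B -> X -> X) (rB : X -> B -> X) :
  banach_algebra mulA -> banach_algebra mulB ->
  envelope mulA mulB iota bA aB ->
  banach_bimodule mulB lB rB ->
  let la := fun a x => lB (iota a) x in
  let ra := fun x a => rB x (iota a) in
  let dc := is_dc mulA la ra in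
  let lact := dc_lact lB aB in
  let ract := dc_ract rB bA in
  banach_bimodule mulA la ra /\
  dc_banach_bimodule dc mulB lact ract /\
  (forall p, dc p -> derivation mulA la ra (fun a => p.1 a - p.2 a)) /\
  (forall D, derivation mulA la ra D ->
     exists Dt, dc_derivation dc mulB lact ract Dt /\
       (forall a, Dt (iota a) = iotaX la ra (D a)) /\
       (dense_square mulA ->
          (forall D', dc_derivation dc mulB lact ract D' ->
             (forall a, D' (iota a) = iotaX la ra (D a)) -> D' = Dt) /\
          (dc_inner dc lact ract Dt ->
             exists p, dc p /\ forall a, D a = p.1 a - p.2 a))).
Proof.
move=> hA hB hE hX.
cbv zeta.
split; first exact: (part1 hE hX).
split; first exact: (part2 hB hE hX).
split; first by move=> p hp; exact: (part3 hX hp).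
move=> D hD; exists (Dt bA aB lB rB D); split; first exact: (Dt_deriv hB hE hX hD).
split; first exact: (Dt_iota hE hD).
move=> hds; split.
  by move=> D' hD' hv; exact: (unique_part hB hE hX hD hds hD' hv).
by move=> hin; exact: (inner_part hE hX hD hin).
Qed.
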